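(* Let $F$ be a field of characteristic $2$, let $i\le n$ be positive integers, let $X_1,\dots,X_{i-1},Y_i,\dots,Y_n,Z_i,\dots,Z_n$ be indeterminates, and let $K=F(X_1,\dots,X_{i-1},Y_i,\dots,Y_n,Z_i,\dots,Z_n)$. Then $$\mathfrak b:=\langle\langle X_1,\dots,X_{i-1}\rangle\rangle_b\otimes\big(\langle\langle Y_i,\dots,Y_n\rangle\rangle_b'\perp\langle\langle Z_i,\dots,Z_n\rangle\rangle_b'\big)$$ is an anisotropic symmetric bilinear form over $K$ of dimension $2^{n+1}-2^i$ with $[\mathfrak b]\in I^n(K)$.
   Context: $\langle\langle a_1,\dots,a_m\rangle\rangle_b=\langle1,a_1\rangle_b\otimes\cdots\otimes\langle1,a_m\rangle_b$ is the $m$-fold bilinear Pfister form, i.e. $\perp_{S\subseteq\{1,\dots,m\}}\langle\prod_{j\in S}a_j\rangle_b$; its pure part $\langle\langle a_1,\dots,a_m\rangle\rangle_b'$ (for $m\ge1$) is $\perp_{\emptyset\ne S\subseteq\{1,\dots,m\}}\langle\prod_{j\in S}a_j\rangle_b$, the complement of $\langle1\rangle_b$. $W(K)$ is the Witt ring of (non-degenerate) symmetric bilinear forms, $I(K)$ its fundamental ideal and $I^n(K)$ its $n$-th power; a form is anisotropic if $\mathfrak b(v,v)\ne0$ for $v\ne0$. *)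

(* Defs.v *)
From HB Require Import structures.
From mathcomp Require Import all_boot all_order all_algebra.
From mathcomp Require Import mpoly.
Set Implicit Arguments. Unset Strict Implicit. Unset Printing Implicit Defensive.
Import GRing.Theory.
Local Open Scope ring_scope.

(* A (possibly degenerate) bilinear form on K^d, given by its Gram matrix:
   b(u,v) = u *m A *m v^T for row vectors u v. *)
Record bform (K : fieldType) := BForm { bdim : nat; bmx : 'M[K]_bdim }.

Section Forms.
Variable K : fieldType.

Definition nondeg (b : bform K) : bool :=
  ((bmx b)^T == bmx b) && (\det (bmx b) != 0).

Definition bval (b : bform K) (u v : 'rV[K]_(bdim b)) : K :=
  (u *m bmx b *m v^T) 0 0.

Definition anisotropic (b : bform K) : Prop :=
  forall v : 'rV[K]_(bdim b), v != 0 -> bval v v != 0.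

Definition bsum (b1 b2 : bform K) : bform K :=
  @BForm K (bdim b1 + bdim b2) (block_mx (bmx b1) 0 0 (bmx b2)).

Definition isometric (b1 b2 : bform K) : Prop :=
  exists P : 'M[K]_(bdim b1, bdim b2),
    [/\ row_free P, row_full P & P^T *m bmx b1 *m P = bmx b2].

Definition metabolic (b : bform K) : Prop :=
  nondeg b /\ exists k, exists U : 'M[K]_(k, bdim b),
    [/\ k.*2 = bdim b, row_free U & U *m bmx b *m U^T = 0].

Definition witt_equiv (b1 b2 : bform K) : Prop :=
  exists m1 m2, metabolic m1 /\ metabolic m2 /\ isometric (bsum b1 m1) (bsum b2 m2).

Definition diagf (s : seq K) : bform K :=
  @BForm K (size s) (diag_mx (\row_(j < size s) s`_j)).

(* tensor product of diagonal forms: <a_i> (x) <b_j> = <a_i b_j> *)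
Definition dtensor (s t : seq K) : seq K := [seq x * y | x <- s, y <- t].

(* bilinear Pfister form <<a_1,...,a_m>>_b = <1,a_1> (x) ... (x) <1,a_m>;
   its first diagonal entry is the entry 1 of the empty subset *)
Definition pfister (a : seq K) : seq K := foldr (fun x p => dtensor [:: 1; x] p) [:: 1] a.

Definition pure_pfister (a : seq K) : seq K := behead (pfister a).

(* [b] \in I^n(K): the class of b is a finite sum of products of n
   elements of the fundamental ideal I(K) (classes of even-dimensional forms,
   represented by non-degenerate even-dimensional diagonal forms).
   In characteristic 2, [b] + [b] = 0, so the additive subgroup generated
   by such products is the set of such finite sums. *)
Definition in_In (n : nat) (b : bform K) : Prop :=
  exists fs : seq (seq (seq K)),
    (forall f, f \in fs -> size f = n /\
        forall g, g \in f -> ~~ odd (size g) /\ all (fun x => x != 0) g) /\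
    witt_equiv b (diagf (flatten [seq foldr dtensor [:: 1] f | f <- fs])).

End Forms.

Definition ratfun (F : fieldType) (m : nat) := {fraction {mpoly F[m]}}.

Definition indet (F : fieldType) (m k : nat) : ratfun F m :=
  if insub k is Some j then @FracField.tofrac {mpoly F[m]} 'X_j else 0.

(* Main.v *)
Require Import Defs.
From HB Require Import structures.
From mathcomp Require Import all_boot all_order all_algebra.
From mathcomp Require Import mpoly.
From mathcomp Require Import fingroup perm.
From mathcomp Require Import zify ring.
Set Implicit Arguments. Unset Strict Implicit. Unset Printing Implicit Defensive.
Import GRing.Theory.
Local Open Scope ring_scope.

Section Alg.
Variables (F : fieldType) (m : nat).
Hypothesis hF : 2%N \in [pchar F].
Local Notation R := {mpoly F[m]}.

Lemma two0R : (2%:R : R) = 0.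
Proof. by rewrite -mpolyC_nat (pcharf0 hF) mpolyC0. Qed.

Lemma sqrD2 (x y : R) : (x + y)^+2 = x^+2 + y^+2.
Proof. by rewrite sqrrD -mulr_natr two0R mulr0 addr0. Qed.

Lemma sqr_sum (I : Type) (r : seq I) (P : pred I) (f : I -> R) :
  (\sum_(i <- r | P i) f i)^+2 = \sum_(i <- r | P i) (f i)^+2.
Proof. by elim/big_rec2: _ => [|i a b _ <-]; rewrite ?expr0n ?sqrD2. Qed.

Lemma sqr_mpoly (p : R) : p^+2 = \sum_(mm <- msupp p) (p@_mm)^+2 *: 'X_[mm + mm].
Proof.
rewrite {1}[p]mpolyE sqr_sum; apply: eq_bigr => mm _.
rewrite exprZn mpolyXn; congr (_ *: mpolyX _ _); apply/mnmP => k; rewrite mulmnE mnmDE; lia.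
Qed.

Definition mono (A : {set 'I_m}) : 'X_{1..m} := [multinom (i \in A : nat) | i < m].

Lemma mono_par A B (a b : 'X_{1..m}) :
  (mono A + (a + a) = mono B + (b + b))%MM -> A = B /\ a = b.
Proof.
move=> /mnmP H.
have H2 k : (k \in A) = (k \in B) /\ a k = b k.
  have := H k; rewrite !mnmDE !mnmE.
  case: (k \in A); case: (k \in B) => /=; lia.
split; first by apply/setP => k; case: (H2 k).
by apply/mnmP => k; case: (H2 k).
Qed.

Lemma coeff_term U (w : R) M :
  ('X_[U] * w^+2)@_M = \sum_(mm <- msupp w) (w@_mm)^+2 * ((U + (mm + mm))%MM == M)%:R.
Proof.
rewrite sqr_mpoly mulr_sumr raddf_sum; apply: eq_bigr => mm _.
rewrite -scalerAr -mpolyXD /= mcoeffZ mcoeffX.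
by [].
Qed.

Lemma coreA N (S : 'I_N -> {set 'I_m}) (w : 'I_N -> R) :
  injective S -> \sum_j 'X_[mono (S j)] * (w j)^+2 = 0 -> forall j, w j = 0.
Proof.
move=> injS H j0; apply/eqP; apply/negPn/negP => nz.
have [m0 m0in] : exists m0, m0 \in msupp (w j0).
  case E: (msupp (w j0)) => [|x s]; last by exists x; rewrite mem_head.
  by move: nz; rewrite -msupp_eq0 E.
have := congr1 (mcoeff (mono (S j0) + (m0 + m0))) H.
rewrite raddf_sum mcoeff0 (bigD1 j0) //= big1 ?addr0; last first.
  move=> j nj; rewrite coeff_term big1_seq // => mm _.
  case: eqP => [/mono_par [/injS E _]|]; last by rewrite mulr0.
  by move: nj; rewrite E eqxx.
rewrite coeff_term (bigD1_seq m0) ?msupp_uniq //= eqxx mulr1 big1 ?addr0.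
  by move: m0in; rewrite mcoeff_msupp => /negbTE nz0 /eqP; rewrite expf_eq0 /= nz0.
move=> mm nmm; case: eqP => [/mono_par [_ E]|]; last by rewrite mulr0.
by move: nmm; rewrite E eqxx.
Qed.

End Alg.
Section Frac.
Variables (F : fieldType) (m : nat).
Hypothesis hF : 2%N \in [pchar F].
Local Notation R := {mpoly F[m]}.
Local Notation K := (ratfun F m).
Local Notation tf := (@FracField.tofrac R).

Definition E (A : {set 'I_m}) : K := tf 'X_[mono A].

Lemma frac_repr (x : K) : exists a b : R, b != 0 /\ x = tf a / tf b.
Proof.
exists (\n_(generic_quotient.repr x)), (\d_(generic_quotient.repr x)); split; first exact: denom_ratioP.
rewrite -[x in LHS]reprK; unlock FracField.tofrac.
rewrite /GRing.inv /GRing.mul /=.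
rewrite -(FracField.pi_inv (Ratio _ 1)) -FracField.pi_mul.
rewrite /FracField.invf /FracField.mulf /=.
rewrite !numden_Ratio ?oner_neq0 // ?denom_ratioP //.
by rewrite mulr1 mul1r Ratio_numden.
Qed.

Lemma cden (l : seq K) : exists2 q : R, q != 0 & forall x, x \in l -> exists w : R, tf q * x = tf w.
Proof.
elim: l => [|x l [q q0 Hq]]; first by exists 1; rewrite ?oner_neq0.
have [a [b [b0 ->]]] := frac_repr x.
exists (q * b); first by rewrite mulf_neq0.
move=> y; rewrite inE => /orP [/eqP ->|/Hq [w Hw]].
  exists (q * a); rewrite !tofracM mulrACA divff ?mulr1 //.
  by rewrite tofrac_eq0.
by exists (w * b); rewrite !tofracM mulrAC Hw.
Qed.

Lemma aniso_mono (Ss : seq {set 'I_m}) : uniq Ss -> anisotropic (diagf [seq E A | A <- Ss]).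
Proof.
move=> uS /= v vnz; apply/negP => /eqP H.
move: H; rewrite /bval /= mul_mx_diag mxE => H.
have H2 : \sum_k v 0 k * [seq E A | A <- Ss]`_k * v 0 k = 0.
  by rewrite -[RHS]H; apply: eq_bigr => k0 _; rewrite !mxE.
have [q q0 Hq] := cden [seq v 0 k | k <- enum 'I_(size [seq E A | A <- Ss])].
have Hex k : exists w : R, tf q * v 0 k == tf w.
  have [w Hw] := Hq (v 0 k) (map_f _ (mem_enum _ k)).
  by exists w; rewrite Hw.
pose w k := xchoose (Hex k).
have Hw k : tf q * v 0 k = tf (w k) by apply/eqP; exact: (xchooseP (Hex k)).
pose S (k : 'I_(size [seq E A | A <- Ss])) := nth set0 Ss k.
have hi (k : 'I_(size [seq E A | A <- Ss])) : (k < size Ss)%N.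
  by rewrite -(size_map E) ltn_ord.
have injS : injective S.
  by move=> i j /eqP; rewrite /S nth_uniq ?hi // => /eqP/val_inj.
have key : \sum_k 'X_[mono (S k)] * (w k)^+2 = 0.
  apply/eqP; rewrite -tofrac_eq0 rmorph_sum /=.
  rewrite (eq_bigr (fun k => tf q ^+ 2 * (v 0 k * [seq E A | A <- Ss]`_k * v 0 k))).
    by rewrite -mulr_sumr H2 mulr0.
  move=> k _; rewrite tofracM tofracXn -Hw (nth_map set0) ?hi //.
  rewrite /E /S; ring.
move: vnz; apply/negP; rewrite negbK; apply/eqP/rowP => k; rewrite mxE.
have := coreA hF injS key k => wk0.
by move: (Hw k); rewrite wk0 tofrac0 => /eqP; rewrite mulf_eq0 tofrac_eq0 (negbTE q0) => /eqP.
Qed.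
End Frac.
Section Iso.
Variable K : fieldType.

Definition dlist a (M : 'M[K]_a) (l : seq K) :=
  size l = a /\ forall i j : 'I_a, M i j = (i == j)%:R * l`_i.

Lemma dlist_diagf (s : seq K) : dlist (bmx (diagf s)) s.
Proof.
split=> // i j; rewrite /= !mxE.
by case: eqP => [->|]; rewrite ?mulr1n ?mulr0n ?mul1r ?mul0r.
Qed.

Lemma dlist_block a b (M1 : 'M[K]_a) (M2 : 'M[K]_b) l1 l2 :
  dlist M1 l1 -> dlist M2 l2 -> dlist (block_mx M1 0 0 M2) (l1 ++ l2).
Proof.
move=> [s1 H1] [s2 H2]; split; first by rewrite size_cat s1 s2.
move=> i j; case: (split_ordP i) => i' ->; case: (split_ordP j) => j' ->.
- by rewrite block_mxEul H1 eq_lshift nth_cat s1 /= ltn_ord.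
- by rewrite block_mxEur mxE eq_lrshift mul0r.
- by rewrite block_mxEdl mxE eq_rlshift mul0r.
- by rewrite block_mxEdr H2 eq_rshift nth_cat s1 /= ltnNge leq_addr /= addKn.
Qed.

Lemma sum_delta n (x : 'I_n) (f : 'I_n -> K) : \sum_i (i == x)%:R * f i = f x.
Proof.
rewrite (bigD1 x) //= eqxx mul1r big1 ?addr0 // => i /negbTE ->.
by rewrite mul0r.
Qed.

Lemma iso_perm a b (M1 : 'M[K]_a) (M2 : 'M[K]_b) l1 l2 :
  dlist M1 l1 -> dlist M2 l2 -> perm_eq l1 l2 ->
  exists P : 'M[K]_(a, b), [/\ row_free P, row_full P & P^T *m M1 *m P = M2].
Proof.
move=> [s1 H1] [s2 H2] pl.
have eab : a = b by rewrite -s1 -s2; apply: perm_size.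
move: M2 s2 H2; rewrite -eab => M2 s2 H2.
have tE : val [tuple l1`_i | i < a] = l1.
  rewrite /= -s1 -[RHS](mkseq_nth 0) /mkseq -val_enum_ord -map_comp.
  by [].
have : perm_eq l2 [tuple l1`_i | i < a] by rewrite tE perm_sym.
case/tuple_permP => p l2E.
have l2n (j : 'I_a) : l2`_j = l1`_(p j).
  by rewrite l2E /= (nth_map j) ?size_enum_ord // nth_ord_enum tnth_mktuple.
pose P := \matrix_(i, j) ((i == p j)%:R : K).
have PtP : P^T *m P = 1%:M.
  apply/matrixP => j k; rewrite !mxE.
  under eq_bigr do rewrite !mxE.
  by rewrite sum_delta (inj_eq perm_inj).
have rk : \rank P = a.
  apply/eqP; rewrite eqn_leq rank_leq_row /=.
  by rewrite -{1}(mxrank1 K a) -PtP mxrankM_maxr.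
exists P; split; rewrite /row_free /row_full ?rk //.
apply/matrixP => j k; rewrite H2 !mxE.
under eq_bigr do rewrite !mxE.
under eq_bigr => i _.
  rewrite (_ : \sum_j0 _ = (p j == i)%:R * l1`_(p j)); last first.
    under eq_bigr do rewrite !mxE H1.
    by rewrite sum_delta.
  over.
rewrite (eq_bigr (fun i => (i == p j)%:R * (l1`_(p j) * (i == p k)%:R))).
  by rewrite sum_delta (inj_eq perm_inj) l2n mulrC.
by move=> i _; rewrite eq_sym mulrA.
Qed.
End Iso.
Section Comb.
Variable m : nat.
Definition Sk (k : nat) : {set 'I_m} := [set j : 'I_m | val j == k].
Definition VS (ks : seq nat) : {set 'I_m} := [set j : 'I_m | val j \in ks].

Fixpoint psets (ks : seq nat) : seq {set 'I_m} :=
  if ks is k :: ks' then psets ks' ++ [seq Sk k :|: A | A <- psets ks'] else [:: set0].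

Lemma ps_sub ks (A : {set 'I_m}) : A \in psets ks -> A \subset VS ks.
Proof.
elim: ks A => [|k ks IH] A /=; first by rewrite inE => /eqP ->; rewrite sub0set.
rewrite mem_cat => /orP [/IH sA|/mapP [B /IH sB ->]].
  by apply: (subset_trans sA); apply/subsetP => j; rewrite !inE => ->; rewrite orbT.
rewrite subUset; apply/andP; split; apply/subsetP => j; rewrite !inE.
  by move=> ->.
by move=> jB; move/subsetP: sB => /(_ j jB); rewrite inE => ->; rewrite orbT.
Qed.

Lemma Sk1 k (hk : (k < m)%N) : Sk k = [set Ordinal hk].
Proof. by apply/setP => j; rewrite !inE. Qed.

Lemma ps_mem ks (A : {set 'I_m}) : all (fun k => k < m)%N ks -> A \subset VS ks -> A \in psets ks.
Proof.
elim: ks A => [|k ks IH] A /=.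
  move=> _ sA; rewrite inE; apply/eqP/setP => j; rewrite inE.
  by apply/negbTE; apply/negP => /(subsetP sA); rewrite inE.
case/andP => hk hks sA; rewrite mem_cat.
have sB : A :\: Sk k \subset VS ks.
  apply/subsetP => j; rewrite !inE => /andP [njk jA].
  by move/subsetP: sA => /(_ j jA); rewrite inE in_cons (negbTE njk).
case: (boolP (Ordinal hk \in A)) => ko.
  apply/orP; right; apply/mapP; exists (A :\: Sk k); first exact: IH.
  apply/setP => j; rewrite !inE; case: eqP => //= jk.
  by have -> : j = Ordinal hk by apply: val_inj.
apply/orP; left; rewrite (_ : A = A :\: Sk k); first exact: IH.
apply/setP => j; rewrite !inE; case: eqP => //= jk.
have -> : j = Ordinal hk by apply: val_inj.
by rewrite (negbTE ko).
Qed.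

Lemma ps_uniq ks : all (fun k => k < m)%N ks -> uniq ks -> uniq (psets ks).
Proof.
elim: ks => [|k ks IH] //= /andP [hk hks] /andP [nk uks].
have dis A : A \in psets ks -> Ordinal hk \notin A.
  move/ps_sub/subsetP => sA; apply/negP => /sA; by rewrite inE /= (negbTE nk).
rewrite cat_uniq IH //=; apply/andP; split.
  apply/hasPn => B /mapP [A Ain ->]; apply/negP => /dis; by rewrite !inE eqxx.
rewrite map_inj_in_uniq ?IH // => A B Ain Bin E.
apply/setP => j; have := congr1 (fun S : {set 'I_m} => j \in S) E; rewrite /= !inE.
case: eqP => //= jk.
have -> : j = Ordinal hk by apply: val_inj.
by rewrite (negbTE (dis _ Ain)) (negbTE (dis _ Bin)).
Qed.

Lemma ps_head ks : psets ks = set0 :: behead (psets ks).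
Proof. by elim: ks => [|k ks IH] //=; rewrite IH. Qed.

Lemma ps_size ks : size (psets ks) = (2 ^ size ks)%N.
Proof. by elim: ks => [|k ks IH] //=; rewrite size_cat size_map IH expnS mul2n addnn. Qed.

Lemma VS_cat ks1 ks2 : VS (ks1 ++ ks2) = VS ks1 :|: VS ks2.
Proof. by apply/setP => j; rewrite !inE mem_cat. Qed.

End Comb.
Section EL.
Variables (F : fieldType) (m : nat).
Hypothesis hF : 2%N \in [pchar F].
Local Notation R := {mpoly F[m]}.
Local Notation K := (ratfun F m).
Local Notation tf := (@FracField.tofrac R).
Local Notation E := (@E F m).

Lemma E_neq0 A : E A != 0.
Proof.
rewrite /E tofrac_eq0; apply/negP => /eqP h.
have := congr1 (mcoeff (mono A)) h; rewrite mcoeffX eqxx mcoeff0 => /eqP.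
by rewrite oner_eq0.
Qed.

Lemma E_mul (A B : {set 'I_m}) : A :&: B = set0 -> E A * E B = E (A :|: B).
Proof.
move=> AB; rewrite /E -tofracM -mpolyXD; congr (tf (mpolyX _ _)).
apply/mnmP => k; rewrite mnmDE !mnmE !inE.
case kA : (k \in A); case kB : (k \in B) => //=.
by have := congr1 (fun S : {set 'I_m} => k \in S) AB; rewrite !inE kA kB.
Qed.

Lemma E0 : E set0 = 1.
Proof.
rewrite /E (_ : mono set0 = 0%MM) ?mpolyX0 ?tofrac1 //.
by apply/mnmP => k; rewrite !mnmE inE.
Qed.

Lemma indet_E k : (k < m)%N -> indet F m k = E (Sk m k).
Proof.
move=> hk; rewrite /indet insubT /E; congr (tf (mpolyX _ _)).
by apply/mnmP => j; rewrite !mnmE !inE eq_sym.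
Qed.

Lemma dtensor_E (P Q : seq {set 'I_m}) :
  (forall A B, A \in P -> B \in Q -> A :&: B = set0) ->
  dtensor (map E P) (map E Q) = map E [seq A :|: B | A <- P, B <- Q].
Proof.
move=> H; rewrite /dtensor allpairs_mapl allpairs_mapr map_allpairs.
by apply/eq_in_allpairs => A B hA hB; rewrite E_mul // H.
Qed.

Lemma map_set0U (P : seq {set 'I_m}) : [seq set0 :|: B | B <- P] = P.
Proof. by elim: P => //= B P ->; rewrite set0U. Qed.

Lemma pfister_E ks : all (fun k => k < m)%N ks -> uniq ks ->
  pfister [seq indet F m k | k <- ks] = map E (psets m ks).
Proof.
elim: ks => [|k ks IH] /=; first by rewrite E0.
case/andP => hk hks /andP [nk uks].
rewrite IH // indet_E // -E0 -[[:: E set0; E (Sk m k)]]/(map E [:: set0; Sk m k]).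
rewrite dtensor_E.
  rewrite /= cats0 map_set0U; reflexivity.
move=> A B; rewrite !inE => /orP [/eqP ->|/eqP ->]; first by rewrite set0I.
move/ps_sub/subsetP => sB; apply/setP => j; rewrite !inE.
apply/negbTE/negP => /andP [/eqP jk /sB]; by rewrite inE jk (negbTE nk).
Qed.

Lemma two0K : (2%:R : K) = 0.
Proof. by rewrite -(rmorph_nat tf) two0R // tofrac0. Qed.

End EL.
Section SetComb.
Variable T : finType.
Implicit Types (A B C V W : {set T}).

Lemma splitU V W A B A' B' : V :&: W = set0 -> A \subset V -> A' \subset V ->
  B \subset W -> B' \subset W -> A :|: B = A' :|: B' -> A = A' /\ B = B'.
Proof.
move=> VW sA sA' sB sB' E.
have h x := congr1 (fun S : {set T} => x \in S) E.
have hv x := congr1 (fun S : {set T} => x \in S) VW.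
split; apply/setP => x; move: (h x) (hv x) (subsetP sA x) (subsetP sA' x) (subsetP sB x) (subsetP sB' x);
  rewrite /= !inE => + + /implyP + /implyP + /implyP + /implyP;
  by case: (x \in A); case: (x \in A'); case: (x \in B); case: (x \in B'); case: (x \in V); case: (x \in W).
Qed.

Lemma sub_dis A B V W : V :&: W = set0 -> A \subset V -> B \subset W -> A :&: B = set0.
Proof.
move=> VW sA sB; apply/setP => x; rewrite !inE.
have := congr1 (fun S : {set T} => x \in S) VW; rewrite /= !inE.
move: (subsetP sA x) (subsetP sB x) => /implyP + /implyP.
by case: (x \in A); case: (x \in B); case: (x \in V); case: (x \in W).
Qed.

Lemma count_main (PX Y' Z' PXY PXZ : seq {set T}) VX VY VZ :
  VX :&: VY = set0 -> VX :&: VZ = set0 -> VY :&: VZ = set0 ->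
  (forall A, (A \in PX) = (A \subset VX)) ->
  (forall A, (A \in set0 :: Y') = (A \subset VY)) ->
  (forall A, (A \in set0 :: Z') = (A \subset VZ)) ->
  (forall A, (A \in PXY) = (A \subset VX :|: VY)) ->
  (forall A, (A \in PXZ) = (A \subset VX :|: VZ)) ->
  uniq PX -> uniq (set0 :: Y') -> uniq (set0 :: Z') -> uniq PXY -> uniq PXZ ->
  uniq [seq A :|: B | A <- PX, B <- Y' ++ Z'] ->
  perm_eq ([seq A :|: B | A <- PX, B <- Y' ++ Z'] ++ (PX ++ PX)) (PXY ++ (PXZ ++ [::])).
Proof.
move=> dXY dXZ dYZ hX hY hZ hXY hXZ uX uY uZ uXY uXZ uB.
have side (W : {set T}) L : VX :&: W = set0 -> (forall A, (A \in set0 :: L) = (A \subset W)) ->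
    uniq (set0 :: L) -> forall B C, B \subset VX -> C \in L ->
    (B :|: C \subset VX :|: W) && ~~ (B :|: C \subset VX).
  move=> dXW hL uL B C sB hC.
  have sC : C \subset W by rewrite -hL inE hC orbT.
  have nC : C != set0 by apply/negP => /eqP C0; move: uL; rewrite /= -C0 hC.
  rewrite setUSS //=; apply/negP => /subsetP s; move: nC; apply/negP; rewrite negbK.
  apply/eqP; rewrite -[C]setIid; apply: (sub_dis dXW); last exact: sC.
  by apply/subsetP => x xC; apply: s; rewrite inE xC orbT.
have side2 (W : {set T}) L : (forall A, (A \in set0 :: L) = (A \subset W)) ->
    forall A, A \subset VX :|: W -> ~~ (A \subset VX) ->
    exists p : {set T} * {set T}, [/\ p.1 \in PX, p.2 \in L & A = p.1 :|: p.2].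
  move=> hL A sA nA; exists (A :&: VX, A :&: W); split => /=.
  - by rewrite hX subsetIr.
  - have : A :&: W \in set0 :: L by rewrite hL subsetIr.
    rewrite inE => /orP [/eqP h|//]; case/negP: nA.
    apply/subsetP => x xA; have := subsetP sA x xA; rewrite inE => /orP [//|xW].
    have : x \in A :&: W by rewrite inE xA xW.
    by rewrite h inE.
  - by rewrite -setIUr; apply/esym/setIidPl.
have memb A : (A \in [seq A :|: B | A <- PX, B <- Y' ++ Z']) =
   ((A \subset VX :|: VY) || (A \subset VX :|: VZ)) && ~~ (A \subset VX).
  apply/allpairsP/idP => [[[B C] [/= hB hC ->]]|].
    rewrite hX in hB; rewrite mem_cat in hC.
    case/orP: hC => hC.
      by case/andP: (side _ _ dXY hY uY _ _ hB hC) => -> ->.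
    by case/andP: (side _ _ dXZ hZ uZ _ _ hB hC) => -> ->; rewrite orbT.
  case/andP => /orP [sA|sA] nA.
    have [p [h1 h2 h3]] := side2 _ _ hY A sA nA.
    by exists p; split => //; rewrite mem_cat h2.
  have [p [h1 h2 h3]] := side2 _ _ hZ A sA nA.
  by exists p; split => //; rewrite mem_cat h2 orbT.
rewrite /perm_eq; apply/allP => A _; apply/eqP.
rewrite !count_cat !count_uniq_mem // memb !hX hXY hXZ in_nil.
have ay : (A \subset VX) ==> (A \subset VX :|: VY).
  by apply/implyP => h; apply: (subset_trans h); apply: subsetUl.
have az : (A \subset VX) ==> (A \subset VX :|: VZ).
  by apply/implyP => h; apply: (subset_trans h); apply: subsetUl.
have yza : (A \subset VX :|: VY) ==> (A \subset VX :|: VZ) ==> (A \subset VX).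
  apply/implyP => /subsetP h1; apply/implyP => /subsetP h2; apply/subsetP => x xA.
  have := h1 x xA; have := h2 x xA; have := congr1 (fun S : {set T} => x \in S) dYZ.
  rewrite /= !inE; by case: (x \in VX); case: (x \in VY); case: (x \in VZ).
move: ay az yza.
by case: (A \subset VX); case: (A \subset VX :|: VY); case: (A \subset VX :|: VZ).
Qed.
End SetComb.
Section Forms2.
Variable K : fieldType.

Lemma nondeg_diagf (s : seq K) : all (fun x => x != 0) s -> nondeg (diagf s).
Proof.
move=> hs; rewrite /nondeg /= tr_diag_mx eqxx /= det_diag.
apply/prodf_neq0 => i _; rewrite mxE; apply: (allP hs); exact: mem_nth.
Qed.

Lemma nondeg_bsum (b1 b2 : bform K) : nondeg b1 -> nondeg b2 -> nondeg (bsum b1 b2).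
Proof.
rewrite /nondeg /= => /andP [/eqP t1 d1] /andP [/eqP t2 d2].
by rewrite tr_block_mx t1 t2 !trmx0 eqxx /= det_ublock mulf_neq0.
Qed.

Lemma metab_double (s : seq K) : (2%:R : K) = 0 -> all (fun x => x != 0) s ->
  metabolic (bsum (diagf s) (diagf s)).
Proof.
move=> two hs; split; first by apply: nondeg_bsum; apply: nondeg_diagf.
exists (size s), (row_mx 1%:M 1%:M); split; rewrite /= ?addnn //.
- rewrite /row_free; apply/eqP/anti_leq; rewrite rank_leq_row /=.
  have e : row_mx (1%:M : 'M[K]_(size s)) 1%:M *m col_mx 1%:M 0 = 1%:M.
    by rewrite mul_row_col !mulmx1 mulmx0 addr0.
  by have := mxrankM_maxl (row_mx (1%:M : 'M[K]_(size s)) 1%:M) (col_mx 1%:M 0); rewrite e mxrank1.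
- rewrite mul_row_block !mulmx0 !mul1mx addr0 add0r tr_row_mx !trmx1 mul_row_col !mulmx1.
  by apply/matrixP => i j; rewrite !mxE -mulr2n -mulr_natr two mulr0.
Qed.

Lemma metab_nil : metabolic (diagf ([::] : seq K)).
Proof.
split.
  rewrite /nondeg /=; apply/andP; split.
    by apply/eqP/matrixP => i; case: i.
  by rewrite det_mx00 oner_neq0.
exists 0%N, 0; split => //.
by rewrite /row_free mxrank0.
by rewrite mul0mx mul0mx.
Qed.
End Forms2.
Lemma dim_arith i n : (0 < i)%N -> (i <= n)%N ->
  (2 ^ i.-1 * ((2 ^ (n - i).+1).-1 + (2 ^ (n - i).+1).-1))%N = (2 ^ n.+1 - 2 ^ i)%N.
Proof.
move=> hi hin.
have e1 : (i.-1 + (n - i).+1 + 1 = n.+1)%N by lia.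
have e2 : (i.-1 + 1 = i)%N by lia.
have -> : (2 ^ n.+1 = 2 ^ i.-1 * 2 ^ (n - i).+1 * 2 ^ 1)%N by rewrite -!expnD e1.
have -> : (2 ^ i = 2 ^ i.-1 * 2 ^ 1)%N by rewrite -expnD e2.
have : (0 < 2 ^ (n - i).+1)%N by rewrite expn_gt0.
move: (2 ^ (n - i).+1)%N (2 ^ i.-1)%N => y x hy; rewrite expn1.
have -> : (y.-1 + y.-1 = y * 2 - 2)%N by lia.
by rewrite mulnBr mulnA.
Qed.

Theorem lemma4p4 (F : fieldType) (hF : 2%N \in [pchar F]) (i n : nat)
    (hi : (0 < i)%N) (hin : (i <= n)%N) :
  let m := (i.-1 + (n - i).+1 + (n - i).+1)%N in
  let T := indet F m in
  let Xs := [seq T k.-1 | k <- iota 1 i.-1] in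
  let Ys := [seq T (i.-1 + (k - i))%N | k <- iota i (n - i).+1] in
  let Zs := [seq T (i.-1 + (n - i).+1 + (k - i))%N | k <- iota i (n - i).+1] in
  let b := diagf (dtensor (pfister Xs) (pure_pfister Ys ++ pure_pfister Zs)) in
  [/\ nondeg b, anisotropic b, bdim b = (2 ^ n.+1 - 2 ^ i)%N & in_In n b].
Proof.
move=> m T Xs Ys Zs b.
set L := (n - i).+1.
have eL : (i.-1 + L = n)%N by rewrite /L; lia.
pose kx := iota 0 i.-1; pose ky := iota i.-1 L; pose kz := iota (i.-1 + L) L.
have iotai (a : nat) : iota a L = map (addn a) (iota 0 L) by rewrite -iotaDl addn0.
have hXs : Xs = [seq indet F m k | k <- kx].
  rewrite /Xs /kx (iotaDl 1 0) -map_comp; apply: eq_map => k /=.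
  by rewrite add0n.
have hYs : Ys = [seq indet F m k | k <- ky].
  rewrite /Ys /ky (iotai i) (iotai i.-1) -!map_comp; apply: eq_map => k /=.
  by rewrite addKn.
have hZs : Zs = [seq indet F m k | k <- kz].
  rewrite /Zs /kz (iotai i) (iotai (i.-1 + L)%N) -!map_comp; apply: eq_map => k /=.
  by rewrite addKn.
have akx : all (fun k => k < m)%N kx by apply/allP => k; rewrite mem_iota /m; lia.
have aky : all (fun k => k < m)%N ky by apply/allP => k; rewrite mem_iota /m; lia.
have akz : all (fun k => k < m)%N kz by apply/allP => k; rewrite mem_iota /m; lia.
have ukx : uniq kx by apply: iota_uniq.
have uky : uniq ky by apply: iota_uniq.
have ukz : uniq kz by apply: iota_uniq.
have uxy : uniq (kx ++ ky).
  rewrite cat_uniq; apply/and3P; split => //; apply/hasPn => k; rewrite !mem_iota; lia.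
have uxz : uniq (kx ++ kz).
  rewrite cat_uniq; apply/and3P; split => //; apply/hasPn => k; rewrite !mem_iota; lia.
have dis (k1 k2 : seq nat) : (forall k, k \in k1 -> k \in k2 -> False) ->
    VS m k1 :&: VS m k2 = set0.
  move=> h; apply/setP => j; rewrite !inE; apply/negbTE/negP => /andP [h1 h2].
  exact: (h _ h1 h2).
have dXY : VS m kx :&: VS m ky = set0 by apply: dis => k; rewrite !mem_iota; lia.
have dXZ : VS m kx :&: VS m kz = set0 by apply: dis => k; rewrite !mem_iota; lia.
have dYZ : VS m ky :&: VS m kz = set0 by apply: dis => k; rewrite !mem_iota; lia.
have memP ks : all (fun k => k < m)%N ks -> forall A, (A \in psets m ks) = (A \subset VS m ks).
  by move=> h A; apply/idP/idP; [apply: ps_sub | apply: ps_mem].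
set PX := psets m kx; set PY := psets m ky; set PZ := psets m kz.
set Y' := behead PY; set Z' := behead PZ.
have hX := memP _ akx.
have hY A : (A \in set0 :: Y') = (A \subset VS m ky) by rewrite /Y' -ps_head memP.
have hZ A : (A \in set0 :: Z') = (A \subset VS m kz) by rewrite /Z' -ps_head memP.
have uX : uniq PX by apply: ps_uniq.
have uY : uniq (set0 :: Y') by rewrite /Y' -ps_head; apply: ps_uniq.
have uZ : uniq (set0 :: Z') by rewrite /Z' -ps_head; apply: ps_uniq.
have hYZ B : B \in Y' ++ Z' -> B \subset VS m (ky ++ kz).
  rewrite mem_cat VS_cat => /orP [h|h].
    by apply: subset_trans (subsetUl _ _); rewrite -hY inE h orbT.
  by apply: subset_trans (subsetUr _ _); rewrite -hZ inE h orbT.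
have dXYZ : VS m kx :&: VS m (ky ++ kz) = set0 by rewrite VS_cat setIUr dXY dXZ setU0.
pose bsets := [seq A :|: B | A <- PX, B <- Y' ++ Z'].
have uYZ : uniq (Y' ++ Z').
  move: uY uZ => /= /andP [nY uY'] /andP [nZ uZ'].
  rewrite cat_uniq uY' uZ' andbT /=; apply/hasPn => C hC; apply/negP => hC'.
  have sY : C \subset VS m ky by rewrite -hY inE hC' orbT.
  have sZ : C \subset VS m kz by rewrite -hZ inE hC orbT.
  have C0 : C = set0 by rewrite -[C]setIid; apply: (sub_dis dYZ).
  by move: nZ; rewrite -C0 hC.
have uB : uniq bsets.
  apply: allpairs_uniq => //.
  move=> [A B] [A' B'] /allpairsP [[a b0] [/= ha hb [-> ->]]].
  move=> /allpairsP [[a' b'] [/= ha' hb' [-> ->]]] /= E.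
  have sa : a \subset VS m kx by rewrite -hX.
  have sa' : a' \subset VS m kx by rewrite -hX.
  by case: (splitU dXYZ sa sa' (hYZ _ hb) (hYZ _ hb') E) => -> ->.
have bE : dtensor (pfister Xs) (pure_pfister Ys ++ pure_pfister Zs) = map (@E F m) bsets.
  rewrite /pure_pfister hXs hYs hZs !pfister_E // !behead_map -map_cat dtensor_E //.
  move=> A B hA hB; apply: (sub_dis dXYZ); [by rewrite -hX | exact: hYZ].
have bdef : b = diagf (map (@E F m) bsets) by rewrite /b bE.
have allE (s : seq {set 'I_m}) : all (fun x => x != 0) (map (@E F m) s).
  by apply/allP => x /mapP [A _ ->]; apply: E_neq0.
rewrite bdef; split.
- exact: nondeg_diagf.
- exact: aniso_mono.
- rewrite /= size_map size_allpairs size_cat !size_behead !ps_size !size_iota.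
  exact: dim_arith.
- have fE (l : seq (ratfun F m)) :
      foldr (@dtensor _) [:: 1] [seq [:: 1; x] | x <- l] = pfister l.
    by elim: l => //= x l ->.
  have Tnz k : (k < m)%N -> indet F m k != 0 by move=> hk; rewrite indet_E // E_neq0.
  have axy : all (fun k => k < m)%N (kx ++ ky) by rewrite all_cat akx aky.
  have axz : all (fun k => k < m)%N (kx ++ kz) by rewrite all_cat akx akz.
  have gok (ks : seq nat) : all (fun k => k < m)%N ks -> forall g,
      g \in [seq [:: 1; x] | x <- [seq indet F m k | k <- ks]] ->
      ~~ odd (size g) /\ all (fun x => x != 0) g.
    move=> h g /mapP [x /mapP [k hk ->] ->]; split => //=.
    by rewrite oner_neq0 Tnz //; exact: (allP h).
  exists [:: [seq [:: 1; x] | x <- Xs ++ Ys]; [seq [:: 1; x] | x <- Xs ++ Zs]]; split.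
    move=> f; rewrite !inE => /orP [/eqP ->|/eqP ->]; rewrite hXs ?hYs ?hZs -map_cat; split.
    + by rewrite !size_map size_cat !size_iota eL.
    + exact: gok.
    + by rewrite !size_map size_cat !size_iota eL.
    + exact: gok.
  rewrite /flatten /= !fE hXs hYs hZs -!map_cat !pfister_E //.
  exists (bsum (diagf (map (@E F m) PX)) (diagf (map (@E F m) PX))), (diagf [::]).
  split. apply: metab_double. exact: (@two0K F m hF). exact: allE.
  split; first exact: metab_nil.
  have pm : perm_eq (map (@E F m) bsets ++ (map (@E F m) PX ++ map (@E F m) PX))
     ((map (@E F m) (psets m (kx ++ ky)) ++ (map (@E F m) (psets m (kx ++ kz)) ++ [::])) ++ [::]).
    rewrite !cats0 -!map_cat; apply: perm_map.
    have mxy A : (A \in psets m (kx ++ ky)) = (A \subset VS m kx :|: VS m ky).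
      by rewrite -VS_cat memP.
    have mxz A : (A \in psets m (kx ++ kz)) = (A \subset VS m kx :|: VS m kz).
      by rewrite -VS_cat memP.
    have := count_main dXY dXZ dYZ hX hY hZ mxy mxz.
    rewrite cats0; apply => //; exact: ps_uniq.
  case: (iso_perm (dlist_block (dlist_diagf (map (@E F m) bsets))
     (dlist_block (dlist_diagf (map (@E F m) PX)) (dlist_diagf (map (@E F m) PX))))
     (dlist_block (dlist_diagf (map (@E F m) (psets m (kx ++ ky)) ++ (map (@E F m) (psets m (kx ++ kz)) ++ [::])))
        (dlist_diagf [::])) pm) => P [h1 h2 h3].
  by exists P.
Qed.
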